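(* Let $\sigma$ be an implicit signature, $\mathsf V$ a pseudovariety of finite semigroups, $X$ a finite alphabet, and $\mathcal C$ the closure under union, product and iteration ($Y\mapsto Y^+$) of some set of finite subsets of $\Omega^\sigma_X\mathsf S$. Suppose the Pin-Reutenauer procedure holds for $\mathcal C$ over $\mathsf V$, i.e. for all $K,L\in\mathcal C$, with closures taken in $\Omega^\sigma_X\mathsf V$, $$\overline{p_{\mathsf V}(K)p_{\mathsf V}(L)}=\overline{p_{\mathsf V}(K)}\;\overline{p_{\mathsf V}(L)}\quad\text{and}\quad\overline{p_{\mathsf V}(L)^+}=\langle\overline{p_{\mathsf V}(L)}\rangle_\sigma.$$ Then $\mathsf V$ is full with respect to $\mathcal C$: for every $L\in\mathcal C$, $p_{\mathsf V}(\overline{L}^{\,\mathsf S})=\overline{p_{\mathsf V}(L)}$, where $\overline{L}^{\,\mathsf S}$ is the closure of $L$ in $\Omega^\sigma_X\mathsf S$ and the right side is the closure in $\Omega^\sigma_X\mathsf V$.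
   Context: $\overline{\Omega}_X\mathsf V$ is the free pro-$\mathsf V$ semigroup on $X$ and $\mathsf S$ the pseudovariety of all finite semigroups. An implicit signature is a set of implicit operations of finite arity containing binary multiplication; $\Omega^\sigma_X\mathsf V$ is the subalgebra of $\overline{\Omega}_X\mathsf V$ generated by $X$ under the operations of $\sigma$, with the induced topology. $p_{\mathsf V}:\overline{\Omega}_X\mathsf S\to\overline{\Omega}_X\mathsf V$ is the natural continuous homomorphism (it maps $\Omega^\sigma_X\mathsf S$ onto $\Omega^\sigma_X\mathsf V$). $\langle U\rangle_\sigma$ is the $\sigma$-subalgebra generated by $U$. *)

(* Defs.v *)
From HB Require Import structures.
From mathcomp Require Import all_boot.
Set Implicit Arguments. Unset Strict Implicit. Unset Printing Implicit Defensive.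

Record finSemigroup := FinSemigroup {
  sg_carrier :> finType;
  smul : sg_carrier -> sg_carrier -> sg_carrier;
  smulA : associative smul }.

Definition sg_hom (S T : finSemigroup) (f : S -> T) : Prop :=
  forall x y, f (smul x y) = smul (f x) (f y).

Definition unitSG : finSemigroup :=
  @FinSemigroup unit (fun _ _ => tt) (fun _ _ _ => erefl).

Definition prod_mul (S T : finSemigroup) (u v : (S * T)%type) : (S * T)%type :=
  (smul u.1 v.1, smul u.2 v.2).
Lemma prod_mulA (S T : finSemigroup) : associative (@prod_mul S T).
Proof. by move=> [? ?] [? ?] [? ?]; rewrite /prod_mul /= !smulA. Qed.
Definition prodSG (S T : finSemigroup) : finSemigroup :=
  @FinSemigroup (S * T)%type (@prod_mul S T) (@prod_mulA S T).

Record pseudovariety (V : finSemigroup -> Prop) : Prop := {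
  pv_sub : forall (S T : finSemigroup) (f : T -> S),
      sg_hom f -> injective f -> V S -> V T;
  pv_quo : forall (S T : finSemigroup) (f : S -> T),
      sg_hom f -> (forall y, exists x, f x = y) -> V S -> V T;
  pv_unit : V unitSG;
  pv_prod : forall S T, V S -> V T -> V (prodSG S T) }.

Definition allSG : finSemigroup -> Prop := fun _ => True.

(** * Free pro-V semigroup on X, as X-ary implicit operations on V.
    An element is a family w_{S,phi} in S, for S in V and phi : X -> S;
    the elements of Omega-bar_X V are the [natural] families. *)
Definition rawfam (X : Type) (V : finSemigroup -> Prop) :=
  forall S : finSemigroup, V S -> (X -> S) -> S.

Definition natural X V (w : rawfam X V) : Prop :=
  forall (S T : finSemigroup) (hS : V S) (hT : V T) (f : S -> T),
    sg_hom f -> forall phi : X -> S, f (w S hS phi) = w T hT (f \o phi).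

Definition implicit_op (n : nat) := {w : rawfam 'I_n allSG | natural w}.
Definition signature := {n : nat & implicit_op n} -> Prop.

Definition mul_raw : rawfam 'I_2 allSG :=
  fun S _ phi => smul (phi ord0) (phi ord_max).
Lemma mul_raw_natural : natural mul_raw.
Proof. by move=> S T hS hT f hf phi; rewrite /mul_raw hf. Qed.
Definition mul_op : {n : nat & implicit_op n} :=
  existT _ 2 (exist _ mul_raw mul_raw_natural).

Definition letter X V (x : X) : rawfam X V := fun S _ phi => phi x.
Definition mulw X V (a b : rawfam X V) : rawfam X V :=
  fun S hS phi => smul (a S hS phi) (b S hS phi).
Definition apply_op X V (o : {n : nat & implicit_op n})
  (ws : 'I_(projT1 o) -> rawfam X V) : rawfam X V :=
  fun S hS phi => sval (projT2 o) S I (fun i => ws i S hS phi).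

Inductive sig_gen X V (sig : signature) (U : rawfam X V -> Prop)
  : rawfam X V -> Prop :=
| sg_base w : U w -> sig_gen sig U w
| sg_op o ws : sig o -> (forall i, sig_gen sig U (ws i)) ->
    sig_gen sig U (@apply_op X V o ws).

Definition Omega_sig X V (sig : signature) : rawfam X V -> Prop :=
  sig_gen sig (fun w => exists x, w = @letter X V x).

(** Topology: the product (pointwise) topology, i.e. the coarsest one
    making every evaluation w |-> w_{S,phi} (S in V discrete) continuous.
    [sclosure sig A] is the closure of A in the subspace Omega^sigma_X V. *)
Record point (X : Type) (V : finSemigroup -> Prop) := Point { pt_S : finSemigroup; pt_V : V pt_S; pt_phi : X -> pt_S }.
Definition agree_at X V (p : point X V) (a b : rawfam X V) : Prop :=
  a (pt_S p) (pt_V p) (pt_phi p) = b (pt_S p) (pt_V p) (pt_phi p).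

Definition sclosure X V (sig : signature) (A : rawfam X V -> Prop) : rawfam X V -> Prop :=
  fun w => Omega_sig sig w /\
    forall (k : nat) (F : 'I_k -> point X V),
      exists2 a, A a & forall i, agree_at (F i) a w.

Definition setmul X V (A B : rawfam X V -> Prop) : rawfam X V -> Prop :=
  fun u => exists a b, A a /\ B b /\ u = mulw a b.
Inductive splus X V (A : rawfam X V -> Prop) : rawfam X V -> Prop :=
| splus1 a : A a -> splus A a
| splusS u a : splus A u -> A a -> splus A (mulw u a).

Definition pV X V (w : rawfam X allSG) : rawfam X V := fun S _ phi => w S I phi.

Definition punion T (A B : T -> Prop) : T -> Prop := fun x => A x \/ B x.
Definition psubset T (A B : T -> Prop) : Prop := forall x, A x -> B x.
Definition pimage T U (f : T -> U) (A : T -> Prop) : U -> Prop :=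
  fun y => exists2 x, A x & f x = y.
Definition finite_pred T (A : T -> Prop) : Prop :=
  exists (n : nat) (f : 'I_n -> T), forall x, A x <-> exists i, f i = x.

Inductive rat_closure X (B : (rawfam X allSG -> Prop) -> Prop)
  : (rawfam X allSG -> Prop) -> Prop :=
| rc_base L : B L -> rat_closure B L
| rc_union K L : rat_closure B K -> rat_closure B L -> rat_closure B (punion K L)
| rc_prod K L : rat_closure B K -> rat_closure B L -> rat_closure B (setmul K L)
| rc_plus L : rat_closure B L -> rat_closure B (splus L).

(* Main.v *)
Require Import Defs.
From mathcomp Require Import all_boot.
From Stdlib Require Import FunctionalExtensionality PropExtensionality ClassicalEpsilon Classical.

Set Implicit Arguments. Unset Strict Implicit. Unset Printing Implicit Defensive.

Lemma rawfam_ext X V (a b : rawfam X V) :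
  (forall S hS phi, a S hS phi = b S hS phi) -> a = b.
Proof.
move=> h; apply: functional_extensionality_dep => S.
apply: functional_extensionality_dep => hS.
apply: functional_extensionality_dep => phi; exact: h.
Qed.

Lemma pV_Omega X V sig (w : rawfam X allSG) :
  Omega_sig sig w -> Omega_sig sig (@pV X V w).
Proof.
elim=> [u [x ->]|o ws so _ IH].
  by apply: sg_base; exists x.
exact: (@sg_op X V sig _ o (fun i => pV (ws i)) so IH).
Qed.

Lemma Omega_natural X sig (w : rawfam X allSG) : Omega_sig sig w -> natural w.
Proof.
elim=> [u [x ->]|o ws so _ IH].
  by move=> S T hS hT f hf phi.
move=> S T hS hT f hf phi; rewrite /apply_op.
rewrite (svalP (projT2 o) S T I I f hf).
congr (sval (projT2 o) T I _); apply: functional_extensionality => i /=.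
exact: IH.
Qed.

Lemma one_point X (k : nat) (F : 'I_k -> point X allSG) :
  exists p : point X allSG, forall a b : rawfam X allSG, natural a -> natural b ->
    agree_at p a b -> forall i, agree_at (F i) a b.
Proof.
elim: k F => [|k IH] F.
  by exists (@Point X allSG unitSG I (fun _ => tt)) => a b _ _ _ [].
have [p Hp] := IH (fun i => F (lift ord0 i)).
set p0 := F ord0.
exists (@Point X allSG (prodSG (pt_S p0) (pt_S p)) I
                 (fun x => (pt_phi p0 x, pt_phi p x))).
move=> a b na nb h i.
case: (unliftP ord0 i) => [j ->|->].
- apply: (Hp a b na nb) => /=.
  have e1 := na (prodSG (pt_S p0) (pt_S p)) _ I (pt_V p) (@snd (pt_S p0) (pt_S p)) (fun _ _ => erefl)
                 (fun x => (pt_phi p0 x, pt_phi p x)).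
  have e2 := nb (prodSG (pt_S p0) (pt_S p)) _ I (pt_V p) (@snd (pt_S p0) (pt_S p)) (fun _ _ => erefl)
                 (fun x => (pt_phi p0 x, pt_phi p x)).
  move/(congr1 snd): h; rewrite e1 e2 => H; exact H.
- have e1 := na (prodSG (pt_S p0) (pt_S p)) _ I (pt_V p0) (@fst (pt_S p0) (pt_S p)) (fun _ _ => erefl)
                 (fun x => (pt_phi p0 x, pt_phi p x)).
  have e2 := nb (prodSG (pt_S p0) (pt_S p)) _ I (pt_V p0) (@fst (pt_S p0) (pt_S p)) (fun _ _ => erefl)
                 (fun x => (pt_phi p0 x, pt_phi p x)).
  move/(congr1 fst): h; rewrite e1 e2 => H; exact H.
Qed.

Lemma cl_from_points X sig (A : rawfam X allSG -> Prop) w :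
  Omega_sig sig w -> (forall a, A a -> natural a) ->
  (forall p : point X allSG, exists2 a, A a & agree_at p a w) ->
  sclosure sig A w.
Proof.
move=> Ow nA H; split=> // k F.
have [p Hp] := one_point F; have [a Aa ag] := H p.
exists a => // i; apply: Hp => //; [exact: nA | exact: Omega_natural Ow].
Qed.

Lemma sclosure_mono X V sig (A B : rawfam X V -> Prop) :
  psubset A B -> psubset (sclosure sig A) (sclosure sig B).
Proof.
move=> AB w [Ow Hw]; split=> // k F.
have [a Aa Ha] := Hw k F; exists a => //; exact: AB.
Qed.

Lemma Omega_mulw X V sig (a b : rawfam X V) : sig mul_op ->
  Omega_sig sig a -> Omega_sig sig b -> Omega_sig sig (mulw a b).
Proof.
move=> sm Ha Hb.
have -> : mulw a b = @apply_op X V mul_op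
     (fun i : 'I_2 => if nat_of_ord i == 0 then a else b) by reflexivity.
apply: sg_op => // i; by case: ifP.
Qed.

Lemma mulwA X V (u v a : rawfam X V) : mulw u (mulw v a) = mulw (mulw u v) a.
Proof. by apply: rawfam_ext => S hS phi; rewrite /mulw smulA. Qed.

Lemma splus_mul X V (A : rawfam X V -> Prop) u v :
  splus A u -> splus A v -> splus A (mulw u v).
Proof.
move=> Hu; elim=> [a Aa|v' a _ IH Aa]; first exact: splusS.
rewrite mulwA; exact: splusS.
Qed.

Lemma splus_Omega X V sig (A : rawfam X V -> Prop) : sig mul_op ->
  psubset A (Omega_sig sig) -> psubset (splus A) (Omega_sig sig).
Proof.
move=> sm HA x; elim=> [a Aa|u a _ IH Aa]; first exact: HA.
apply: Omega_mulw => //; exact: HA.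
Qed.

Lemma pimage_splus X V (L : rawfam X allSG -> Prop) :
  psubset (pimage (@pV X V) (splus L)) (splus (pimage (@pV X V) L)).
Proof.
move=> x [w Hw <-]; elim: Hw => [a La|u a _ IH La].
  by apply: splus1; exists a.
by apply: (splusS IH); exists a.
Qed.

Definition pdec (T : Type) (P : T -> Prop) : pred T :=
  fun t => if excluded_middle_informative (P t) then true else false.
Lemma pdecP T (P : T -> Prop) t : pdec P t <-> P t.
Proof. by rewrite /pdec; case: excluded_middle_informative => h; split. Qed.

Definition sub_carrier (T : finSemigroup) (P : T -> Prop) : finType :=
  {t : sg_carrier T | pdec P t}.

Section SubSG.
End SubSG.

Definition sub_mul (T : finSemigroup) (P : T -> Prop)
  (Pmul : forall x y, P x -> P y -> P (smul x y)) (x y : sub_carrier P) :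
  sub_carrier P :=
  exist _ (smul (sval x) (sval y))
    (proj2 (pdecP P _) (Pmul _ _ (proj1 (pdecP P _) (svalP x))
                                 (proj1 (pdecP P _) (svalP y)))).

Lemma sub_mulA (T : finSemigroup) (P : T -> Prop) Pmul :
  associative (@sub_mul T P Pmul).
Proof. by move=> x y z; apply: val_inj; rewrite /= smulA. Qed.

Definition subSG (T : finSemigroup) (P : T -> Prop) Pmul : finSemigroup :=
  @FinSemigroup (sub_carrier P) (@sub_mul T P Pmul) (@sub_mulA T P Pmul).

Lemma subsg_op (T : finSemigroup) (P : T -> Prop)
  (Pmul : forall x y, P x -> P y -> P (smul x y))
  n (o : implicit_op n) (t : 'I_n -> T) :
  (forall i, P (t i)) -> P (sval o T I t).
Proof.
move=> Pt.
pose t' : 'I_n -> subSG Pmul := fun i => exist _ (t i) (proj2 (pdecP P _) (Pt i)).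
have hom : sg_hom (fun x : subSG Pmul => sval x) by [].
have e := svalP o (subSG Pmul) T I I _ hom t'.
have -> : t = (fun x : subSG Pmul => sval x) \o t' by [].
rewrite -e; exact: (proj1 (pdecP P _) (svalP (sval o (subSG Pmul) I t'))).
Qed.

Theorem proposition4p1 (sig : signature) (V : finSemigroup -> Prop) (X : finType)
  (B : (rawfam X allSG -> Prop) -> Prop) :
  sig mul_op ->
  pseudovariety V ->
  (forall L, B L -> finite_pred L /\ psubset L (Omega_sig sig)) ->
  (forall K L, rat_closure B K -> rat_closure B L ->
     sclosure sig (setmul (pimage (@pV X V) K) (pimage (@pV X V) L))
       = setmul (sclosure sig (pimage (@pV X V) K)) (sclosure sig (pimage (@pV X V) L))
     /\ sclosure sig (splus (pimage (@pV X V) L))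
       = sig_gen sig (sclosure sig (pimage (@pV X V) L))) ->
  forall L, rat_closure B L ->
    pimage (@pV X V) (sclosure sig L) = sclosure sig (pimage (@pV X V) L).
Proof.
move=> sm pvV HB HPR.
have key : forall L, rat_closure B L -> psubset L (Omega_sig sig) /\
   psubset (sclosure sig (pimage (@pV X V) L)) (pimage (@pV X V) (sclosure sig L)).
  move=> L0; elim=> [L BL | K L _ [OK IK] _ [OL IL] | K L HK [OK IK] HL [OL IL] | L HL [OL IL]].
  -
    split; first exact: (HB L BL).2.
    move=> v [Ov Hv]; have [n [f Hf]] := (HB L BL).1.
    case: (classic (exists i, pV (f i) = v)) => [[i Ei]|Hn].
      exists (f i) => //; split; first by apply: (HB L BL).2; apply/Hf; exists i.
      by move=> k F; exists (f i) => //; apply/Hf; exists i.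
    have Hq : forall i, exists q : point X V, ~ agree_at q (pV (f i)) v.
      move=> i; apply: NNPP => H; apply: Hn; exists i.
      apply: rawfam_ext => S hS phi; apply: NNPP => H2; apply: H.
      by exists (@Point X V S hS phi).
    pose F i := proj1_sig (constructive_indefinite_description _ (Hq i)).
    have [a [x Lx <-] Ha] := Hv n F.
    have [j Ej] := (proj1 (Hf x)) Lx; subst x.
    exfalso; apply: (proj2_sig (constructive_indefinite_description _ (Hq j))).
    exact: Ha j.
  -
    split; first by move=> x [/OK|/OL].
    move=> v Hv.
    have : sclosure sig (pimage (@pV X V) K) v \/ sclosure sig (pimage (@pV X V) L) v.
      apply: NNPP => /not_or_and [nK nL].
      have Ov := Hv.1.
      have [k1 [F1 HF1]] : exists k (F : 'I_k -> point X V), forall a, pimage (@pV X V) K a ->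
          ~ forall i, agree_at (F i) a v.
        apply: NNPP => H; apply: nK; split=> // k F; apply: NNPP => H2; apply: H.
        by exists k, F => a Ka Hall; apply: H2; exists a.
      have [k2 [F2 HF2]] : exists k (F : 'I_k -> point X V), forall a, pimage (@pV X V) L a ->
          ~ forall i, agree_at (F i) a v.
        apply: NNPP => H; apply: nL; split=> // k F; apply: NNPP => H2; apply: H.
        by exists k, F => a Ka Hall; apply: H2; exists a.
      have [a [x Ux ex] Ha] := Hv.2 (k1 + k2)
         (fun i => match split i with inl j => F1 j | inr j => F2 j end).
      case: Ux => [Kx|Lx].
      + apply: (HF1 a); first by exists x.
        move=> j; move: (Ha (unsplit (inl j))); rewrite unsplitK; exact.
      + apply: (HF2 a); first by exists x.
        move=> j; move: (Ha (unsplit (inr j))); rewrite unsplitK; exact.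
    case=> [/IK|/IL] [w Hw <-]; exists w => //; apply: sclosure_mono Hw => y Hy;
      [left|right]; exact Hy.
  -
    split.
      move=> x [a [b [Ka [Lb ->]]]]; apply: Omega_mulw => //; [exact: OK|exact: OL].
    move=> v Hv.
    have Hv' : sclosure sig (setmul (pimage (@pV X V) K) (pimage (@pV X V) L)) v.
      apply: sclosure_mono Hv => u [x [a [b [Ka [Lb ->]]]] <-].
      exists (pV a), (pV b); split; first by exists a.
      by split; first by exists b.
    rewrite (HPR K L HK HL).1 in Hv'.
    case: Hv' => v1 [v2 [H1 [H2 ->]]].
    have [w1 Hw1 <-] := IK v1 H1.
    have [w2 Hw2 <-] := IL v2 H2.
    exists (mulw w1 w2); last by [].
    split; first exact: Omega_mulw sm Hw1.1 Hw2.1.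
    move=> k F.
    have [a1 Ka1 Ha1] := Hw1.2 k F.
    have [a2 Ka2 Ha2] := Hw2.2 k F.
    exists (mulw a1 a2); first by exists a1, a2.
    move=> i; rewrite /agree_at /mulw; by rewrite (Ha1 i) (Ha2 i).
  -
    have OLp := splus_Omega sm OL.
    split=> // v Hv.
    have Hv' : sclosure sig (splus (pimage (@pV X V) L)) v :=
      sclosure_mono (@pimage_splus X V L) Hv.
    rewrite (HPR L L HL HL).2 in Hv'.
    elim: Hv' {Hv} => {v} [v Hv | o vs so _ IH].
      have [w Hw <-] := IL v Hv.
      exists w => //; apply: sclosure_mono Hw => x; exact: splus1.
    have IH' : forall i, exists w, sclosure sig (splus L) w /\ pV w = vs i.
      by move=> i; have [w ? ?] := IH i; exists w.
    pose ch i := constructive_indefinite_description _ (IH' i).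
    pose ws i := proj1_sig (ch i).
    exists (@apply_op X allSG o ws); last first.
      have -> : vs = fun i => pV (ws i).
        by apply: functional_extensionality_dep => i; rewrite (proj2_sig (ch i)).2.
      reflexivity.
    apply: cl_from_points.
    + exact: (sg_op so (fun i => (proj2_sig (ch i)).1.1)).
    + move=> a Ha; apply: Omega_natural; exact: OLp.
    + move=> p.
      have Hai : forall i, exists a, splus L a /\ agree_at p a (ws i).
        move=> i; have [a ? Hag] := (proj2_sig (ch i)).1.2 1 (fun _ => p).
        by exists a; split=> //; exact: (Hag ord0).
      pose ca i := constructive_indefinite_description _ (Hai i).
      pose P := fun t : pt_S p => exists b, splus L b /\ b (pt_S p) (pt_V p) (pt_phi p) = t.
      have Pmul : forall x y, P x -> P y -> P (smul x y).
        move=> x y [b1 [s1 <-]] [b2 [s2 <-]].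
        by exists (mulw b1 b2); split; first exact: splus_mul.
      have := @subsg_op (pt_S p) P Pmul _ (projT2 o)
         (fun i => proj1_sig (ca i) (pt_S p) (pt_V p) (pt_phi p)).
      case=> [i|b [sb eb]]; first by exists (proj1_sig (ca i)); split=> //; exact: (proj2_sig (ca i)).1.
      exists b => //; rewrite /agree_at eb /apply_op.
      congr (sval (projT2 o) (pt_S p) I _); apply: functional_extensionality => i.
      exact: (proj2_sig (ca i)).2.
move=> L HL.
apply: functional_extensionality => v; apply: propositional_extensionality; split.
- case=> w [Ow Hw] <-; split; first exact: pV_Omega.
  move=> k F.
  pose G := fun i => @Point X allSG (pt_S (F i)) I (pt_phi (F i)).
  have [a La Ha] := Hw k G.
  exists (pV a); first by exists a.
  move=> i; exact: (Ha i).
- exact: (key L HL).2.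
Qed.
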